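(* Let $E\subset\mathbb{R}^n$ be an ellipsoid with $\mathrm{vol}(E)<1$. Then $\mathrm{width}(E)\le n$.
   Context: An ellipsoid is a set $\{x\in\mathbb{R}^n: (x-a)^\top (AA^\top)^{-1}(x-a)\le 1\}$ with $A\in\mathbb{R}^{n\times n}$ non-singular and $a\in\mathbb{R}^n$. For a closed set $P$ and $c\in\mathbb{R}^n$, $\mathrm{width}_c(P)=\max_{x\in P}c^\top x-\min_{x\in P}c^\top x$; the lattice width is $\mathrm{width}(P)=\min\{\mathrm{width}_c(P): c\in\mathbb{Z}^n\setminus\{0\}\}$. *)

(* Defs.v *)
(* classical reals. Vectors of R^n are functions nat -> R of
   which only the coordinates 0..n-1 are used; n x n matrices are
   nat -> nat -> R (only entries with indices < n are used). *)
From Stdlib Require Import Reals ZArith List.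
Open Scope R_scope.

Definition vec := nat -> R.
Definition mat := nat -> nat -> R.

Fixpoint sumR (n : nat) (f : nat -> R) : R :=
  match n with O => 0 | S k => sumR k f + f k end.

Fixpoint prodR (n : nat) (f : nat -> R) : R :=
  match n with O => 1 | S k => prodR k f * f k end.

Definition mmul (n : nat) (A B : mat) : mat :=
  fun i j => sumR n (fun k => A i k * B k j).
Definition mtr (A : mat) : mat := fun i j => A j i.
Definition mvmul (n : nat) (A : mat) (x : vec) : vec :=
  fun i => sumR n (fun k => A i k * x k).
Definition dot (n : nat) (x y : vec) : R := sumR n (fun k => x k * y k).

Definition is_inverse (n : nat) (M B : mat) : Prop :=
  forall i j, (i < n)%nat -> (j < n)%nat ->
    mmul n M B i j = (if Nat.eqb i j then 1 else 0).

(* The ellipsoid { x : (x-a)^T (A A^T)^{-1} (x-a) <= 1 }, where Minv is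
   the inverse of A A^T. *)
Definition ellipsoid (n : nat) (A Minv : mat) (a : vec) : vec -> Prop :=
  fun x => let d := fun i => x i - a i in dot n d (mvmul n Minv d) <= 1.

Definition box := (vec * vec)%type.
Definition in_box (n : nat) (b : box) (x : vec) : Prop :=
  forall i, (i < n)%nat -> fst b i < x i < snd b i.
Definition box_ok (n : nat) (b : box) : Prop :=
  forall i, (i < n)%nat -> fst b i <= snd b i.
Definition box_vol (n : nat) (b : box) : R := prodR n (fun i => snd b i - fst b i).

(* vol(P) < v, for P compact, via the (Lebesgue = Jordan) outer measure:
   P is covered by finitely many boxes of total volume < v. *)
Definition vol_lt (n : nat) (P : vec -> Prop) (v : R) : Prop :=
  exists bs : list box,
    (forall b, In b bs -> box_ok n b) /\
    (forall x, P x -> exists b, In b bs /\ in_box n b x) /\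
    fold_right (fun b s => box_vol n b + s) 0 bs < v.

Definition zvec := nat -> Z.
Definition zvec_nonzero (n : nat) (c : zvec) : Prop :=
  exists i, (i < n)%nat /\ c i <> 0%Z.
Definition zdot (n : nat) (c : zvec) (x : vec) : R :=
  sumR n (fun k => IZR (c k) * x k).

Definition width_dir_le (n : nat) (c : zvec) (P : vec -> Prop) (w : R) : Prop :=
  forall x y, P x -> P y -> zdot n c x - zdot n c y <= w.

Definition lattice_width_le (n : nat) (P : vec -> Prop) (w : R) : Prop :=
  exists c, zvec_nonzero n c /\ width_dir_le n c P w.

(* Main.v *)
Require Import Defs.
From Stdlib Require Import Reals ZArith List.
From Stdlib Require Import Lra Lia Psatz Arith ClassicalEpsilon Classical.
Open Scope R_scope.

Definition indic (P : Prop) : R := if excluded_middle_informative P then 1 else 0.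

Lemma indic_T (P : Prop) : P -> indic P = 1.
Proof. intros H; unfold indic; destruct excluded_middle_informative; tauto. Qed.
Lemma indic_F (P : Prop) : ~ P -> indic P = 0.
Proof. intros H; unfold indic; destruct excluded_middle_informative; tauto. Qed.
Lemma indic_01 (P : Prop) : 0 <= indic P <= 1.
Proof. unfold indic; destruct excluded_middle_informative; lra. Qed.
Lemma indic_and (P Q : Prop) : indic (P /\ Q) = indic P * indic Q.
Proof.
  unfold indic; repeat destruct excluded_middle_informative; try lra; tauto.
Qed.
Lemma indic_iff (P Q : Prop) : (P <-> Q) -> indic P = indic Q.
Proof. intros H; unfold indic; repeat destruct excluded_middle_informative; tauto. Qed.

Lemma sumR_ext n f g : (forall k, (k < n)%nat -> f k = g k) -> sumR n f = sumR n g.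
Proof.
  induction n; simpl; intros H; auto.
  rewrite IHn by (intros; apply H; lia). rewrite H by lia. auto.
Qed.
Lemma sumR_plus n f g : sumR n (fun k => f k + g k) = sumR n f + sumR n g.
Proof. induction n; simpl; [lra|]. rewrite IHn; lra. Qed.
Lemma sumR_minus n f g : sumR n (fun k => f k - g k) = sumR n f - sumR n g.
Proof. induction n; simpl; [lra|]. rewrite IHn; lra. Qed.
Lemma sumR_scal n c f : sumR n (fun k => c * f k) = c * sumR n f.
Proof. induction n; simpl; [lra|]. rewrite IHn; lra. Qed.
Lemma sumR_scalr n c f : sumR n (fun k => f k * c) = sumR n f * c.
Proof. induction n; simpl; [lra|]. rewrite IHn; lra. Qed.
Lemma sumR_zero n f : (forall k, (k < n)%nat -> f k = 0) -> sumR n f = 0.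
Proof. induction n; simpl; intros H; [lra|]. rewrite IHn by (intros; apply H; lia). rewrite H by lia. lra. Qed.
Lemma sumR_const n c : sumR n (fun _ => c) = INR n * c.
Proof. induction n; simpl sumR; [simpl; lra|]. rewrite IHn, S_INR; lra. Qed.
Lemma sumR_le n f g : (forall k, (k < n)%nat -> f k <= g k) -> sumR n f <= sumR n g.
Proof.
  induction n; simpl; intros H; [lra|].
  pose proof (H n ltac:(lia)). pose proof (IHn ltac:(intros; apply H; lia)). lra.
Qed.
Lemma sumR_nonneg n f : (forall k, (k < n)%nat -> 0 <= f k) -> 0 <= sumR n f.
Proof. intros H. rewrite <- (sumR_zero n (fun _ => 0)) by auto. apply sumR_le; auto. Qed.
Lemma sumR_swap n m (f : nat -> nat -> R) :
  sumR n (fun i => sumR m (fun j => f i j)) = sumR m (fun j => sumR n (fun i => f i j)).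
Proof.
  induction n; simpl.
  - rewrite sumR_zero; auto.
  - rewrite IHn, <- sumR_plus. auto.
Qed.
Lemma sumR_kron n j f : (j < n)%nat ->
  sumR n (fun k => if Nat.eqb k j then f k else 0) = f j.
Proof.
  induction n; intros H; [lia|]. simpl.
  destruct (Nat.eq_dec j n).
  - subst. rewrite Nat.eqb_refl. rewrite sumR_zero; [lra|].
    intros k Hk. destruct (Nat.eqb_spec k n); [lia|auto].
  - rewrite IHn by lia. destruct (Nat.eqb_spec n j); [lia|lra].
Qed.
Lemma sumR_kron' n j f : (j < n)%nat ->
  sumR n (fun k => if Nat.eqb j k then f k else 0) = f j.
Proof.
  intros H. rewrite <- (sumR_kron n j f H). apply sumR_ext. intros k _.
  rewrite Nat.eqb_sym. auto.
Qed.
Lemma sumR_sq_zero n f : sumR n (fun k => f k * f k) = 0 -> forall k, (k < n)%nat -> f k = 0.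
Proof.
  induction n; intros H k Hk; [lia|]. simpl in H.
  assert (0 <= sumR n (fun k => f k * f k)) by (apply sumR_nonneg; intros; nra).
  assert (f n * f n = 0) by nra.
  assert (sumR n (fun k => f k * f k) = 0) by nra.
  destruct (Nat.eq_dec k n); [subst; nra|]. apply IHn; auto; lia.
Qed.

Lemma cauchy_schwarz n u v :
  (sumR n (fun k => u k * v k)) ^ 2 <= sumR n (fun k => u k * u k) * sumR n (fun k => v k * v k).
Proof.
  induction n; simpl; [lra|].
  set (B := sumR n (fun k => u k * v k)) in *.
  set (A := sumR n (fun k => u k * u k)) in *.
  set (C := sumR n (fun k => v k * v k)) in *.
  assert (0 <= A) by (apply sumR_nonneg; intros; nra).
  assert (0 <= C) by (apply sumR_nonneg; intros; nra).
  set (x := u n) in *. set (y := v n) in *.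
  assert (2 * B * x * y <= A * y * y + C * x * x).
  { assert (HH: (2*B*x*y)^2 <= (A*y*y + C*x*x)^2).
    { assert (0 <= (A*y*y - C*x*x)^2) by apply pow2_ge_0.
      assert (B^2 * (x*y)^2 <= A*C*(x*y)^2) by (apply Rmult_le_compat_r; [apply pow2_ge_0| simpl in IHn |- *; lra]).
      simpl in *. nra. }
    assert (0 <= A*y*y + C*x*x) by nra.
    destruct (Rle_dec (2*B*x*y) 0); [lra|]. nra. }
  simpl in IHn. nra.
Qed.

Lemma prodR_ext n f g : (forall k, (k < n)%nat -> f k = g k) -> prodR n f = prodR n g.
Proof.
  induction n; simpl; intros H; auto.
  rewrite IHn by (intros; apply H; lia). rewrite H by lia. auto.
Qed.
Lemma prodR_nonneg n f : (forall k, (k < n)%nat -> 0 <= f k) -> 0 <= prodR n f.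
Proof.
  induction n; simpl; intros H; [lra|].
  apply Rmult_le_pos; [apply IHn; intros; apply H; lia| apply H; lia].
Qed.
Lemma prodR_pos n f : (forall k, (k < n)%nat -> 0 < f k) -> 0 < prodR n f.
Proof.
  induction n; simpl; intros H; [lra|].
  apply Rmult_lt_0_compat; [apply IHn; intros; apply H; lia| apply H; lia].
Qed.
Lemma prodR_le n f g : (forall k, (k < n)%nat -> 0 <= f k <= g k) -> prodR n f <= prodR n g.
Proof.
  induction n; simpl; intros H; [lra|].
  assert (0 <= prodR n f) by (apply prodR_nonneg; intros; apply H; lia).
  assert (prodR n f <= prodR n g) by (apply IHn; intros; apply H; lia).
  pose proof (H n ltac:(lia)).
  apply Rmult_le_compat; lra.
Qed.
Lemma prodR_scal n c f : prodR n (fun k => c * f k) = c ^ n * prodR n f.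
Proof. induction n; simpl; [lra|]. rewrite IHn; ring. Qed.
Lemma prodR_mult n f g : prodR n (fun k => f k * g k) = prodR n f * prodR n g.
Proof. induction n; simpl; [lra|]. rewrite IHn; ring. Qed.
Lemma prodR_eps n f e : 0 <= e <= 1 -> (forall k, (k < n)%nat -> 0 <= f k) ->
  prodR n (fun k => f k + e) <= prodR n f + e * INR n * prodR n (fun k => f k + 1).
Proof.
  intros He. induction n; cbn [prodR]; intros H; [simpl; lra|].
  assert (0 <= prodR n f) by (apply prodR_nonneg; intros; apply H; lia).
  assert (0 <= prodR n (fun k => f k + 1)) by (apply prodR_nonneg; intros; pose proof (H k ltac:(lia)); lra).
  assert (prodR n f <= prodR n (fun k => f k + 1)) by (apply prodR_le; intros; pose proof (H k ltac:(lia)); lra).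
  assert (0 <= prodR n (fun k => f k + e)) by (apply prodR_nonneg; intros; pose proof (H k ltac:(lia)); lra).
  pose proof (IHn ltac:(intros; apply H; lia)).
  pose proof (H n ltac:(lia)).
  rewrite S_INR.
  assert (prodR n (fun k => f k + e) * (f n + e) <=
          (prodR n f + e * INR n * prodR n (fun k => f k + 1)) * (f n + e))
    by (apply Rmult_le_compat_r; lra).
  assert (0 <= INR n) by apply pos_INR.
  set (P := prodR n f) in *. set (Q := prodR n (fun k => f k + 1)) in *.
  assert (e * INR n * Q * (f n + e) <= e * INR n * Q * (f n + 1)).
  { apply Rmult_le_compat_l; [|lra]. apply Rmult_le_pos; [|lra]. apply Rmult_le_pos; lra. }
  assert (e * P <= e * Q) by (apply Rmult_le_compat_l; lra).
  assert (e * Q <= e * Q * (f n + 1)).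
  { assert (0 <= e * Q) by (apply Rmult_le_pos; lra). nra. }
  assert (e * P <= e * Q * (f n + 1)) by lra.
  nra.
Qed.

Definition lsum {X : Type} (l : list X) (f : X -> R) : R :=
  fold_right (fun x s => f x + s) 0 l.

Lemma lsum_plus {X} (l : list X) f g : lsum l (fun x => f x + g x) = lsum l f + lsum l g.
Proof. induction l; simpl; [lra|]. rewrite IHl; lra. Qed.
Lemma lsum_scal {X} (l : list X) c f : lsum l (fun x => c * f x) = c * lsum l f.
Proof. induction l; simpl; [lra|]. rewrite IHl; lra. Qed.
Lemma lsum_ext {X} (l : list X) f g : (forall x, In x l -> f x = g x) -> lsum l f = lsum l g.
Proof. induction l; simpl; intros H; auto. rewrite H, IHl; auto. Qed.
Lemma lsum_le {X} (l : list X) f g : (forall x, In x l -> f x <= g x) -> lsum l f <= lsum l g.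
Proof. induction l; simpl; intros H; [lra|]. pose proof (H a (or_introl eq_refl)).
  pose proof (IHl (fun x Hx => H x (or_intror Hx))). lra. Qed.
Lemma lsum_nonneg {X} (l : list X) f : (forall x, In x l -> 0 <= f x) -> 0 <= lsum l f.
Proof. induction l; simpl; intros H; [lra|]. pose proof (H a (or_introl eq_refl)).
  pose proof (IHl (fun x Hx => H x (or_intror Hx))). lra. Qed.
Lemma lsum_sumR {X} (l : list X) N (f : nat -> X -> R) :
  sumR N (fun k => lsum l (f k)) = lsum l (fun x => sumR N (fun k => f k x)).
Proof.
  induction l; simpl.
  - apply sumR_zero; auto.
  - rewrite sumR_plus, IHl. auto.
Qed.
Lemma lsum_ge_one {X} (l : list X) f x0 : In x0 l -> (forall x, In x l -> 0 <= f x) ->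
  1 <= f x0 -> 1 <= lsum l f.
Proof.
  induction l; simpl; intros Hin H H1; [tauto|].
  destruct Hin as [<-|Hin].
  - pose proof (lsum_nonneg l f (fun x Hx => H x (or_intror Hx))). lra.
  - pose proof (H a (or_introl eq_refl)). pose proof (IHl Hin (fun x Hx => H x (or_intror Hx)) H1). lra.
Qed.

Lemma count_ap (lo hi al h : R) : 0 < h -> forall N,
  h * sumR (S N) (fun k => indic (lo < al + INR k * h < hi)) <= Rmax 0 (Rmin hi (al + INR N * h) - lo + h).
Proof.
  intros Hh. induction N.
  - cbn [sumR]. replace (al + INR 0 * h) with al by (simpl; ring).
    destruct (classic (lo < al < hi)) as [Hi|Hi].
    + rewrite indic_T by auto.
      unfold Rmax, Rmin; repeat destruct Rle_dec; lra.
    + rewrite indic_F by auto.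
      unfold Rmax; destruct Rle_dec; lra.
  - change (sumR (S (S N)) ?f) with (sumR (S N) f + f (S N)).
    rewrite Rmult_plus_distr_l. rewrite S_INR.
    destruct (classic (lo < al + (INR N + 1) * h < hi)) as [Hi|Hi].
    + rewrite indic_T by auto.
      revert IHN. unfold Rmax, Rmin; repeat destruct Rle_dec; intros; nra.
    + rewrite indic_F by auto.
      revert IHN. unfold Rmax, Rmin; repeat destruct Rle_dec; intros; nra.
Qed.

Lemma oneD {X} (l : list X) (w lo hi : X -> R) (al ell : R) :
  (forall x, In x l -> 0 <= w x /\ lo x <= hi x) -> 0 <= ell ->
  (forall t, al <= t <= al + ell -> 1 <= lsum l (fun x => w x * indic (lo x < t < hi x))) ->
  ell <= lsum l (fun x => w x * (hi x - lo x)).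
Proof.
  intros Hl Hell Hcov.
  set (Xs := lsum l (fun x => w x * (hi x - lo x))).
  set (W := lsum l w).
  assert (HW : 0 <= W) by (apply lsum_nonneg; intros; apply Hl; auto).
  destruct (Rle_dec ell Xs) as [|Hlt]; [auto|exfalso].
  apply Rnot_le_lt in Hlt.
  destruct (INR_archimed (ell - Xs) (ell * W)) as [N HN]; [lra|].
  assert (HN0 : 0 < INR N).
  { destruct N; [simpl in HN; nra| apply lt_0_INR; lia]. }
  assert (Hell0 : 0 < ell).
  { assert (0 <= Xs) by (apply lsum_nonneg; intros x Hx; pose proof (Hl x Hx); nra). lra. }
  set (h := ell / INR N).
  assert (Hh : 0 < h) by (unfold h; apply Rdiv_lt_0_compat; lra).
  assert (H1 : INR (S N) <= lsum l (fun x => w x * ((hi x - lo x) / h + 1))).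
  { rewrite <- (Rmult_1_r (INR (S N))), <- sumR_const.
    apply Rle_trans with (sumR (S N) (fun k => lsum l (fun x => w x * indic (lo x < al + INR k * h < hi x)))).
    { apply sumR_le. intros k Hk. apply Hcov.
      assert (INR k <= INR N) by (apply le_INR; lia).
      assert (0 <= INR k) by apply pos_INR.
      split; [nra|].
      assert (INR k * h <= INR N * h) by (apply Rmult_le_compat_r; lra).
      assert (INR N * h = ell) by (unfold h; field; lra). lra. }
    rewrite lsum_sumR. apply lsum_le. intros x Hx.
    rewrite sumR_scal. destruct (Hl x Hx) as [Hw Hlh].
    apply Rmult_le_compat_l; auto.
    pose proof (count_ap (lo x) (hi x) al h Hh N).
    assert (Rmax 0 (Rmin (hi x) (al + INR N * h) - lo x + h) <= hi x - lo x + h).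
    { unfold Rmax, Rmin; repeat destruct Rle_dec; lra. }
    apply Rmult_le_reg_l with h; auto.
    replace (h * ((hi x - lo x) / h + 1)) with (hi x - lo x + h) by (field; lra). lra. }
  assert (H2 : lsum l (fun x => w x * ((hi x - lo x) / h + 1)) = Xs / h + W).
  { rewrite (lsum_ext l _ (fun x => / h * (w x * (hi x - lo x)) + w x))
      by (intros; field; lra).
    rewrite lsum_plus, lsum_scal. unfold Xs, W. field. lra. }
  rewrite H2, S_INR in H1. unfold h in H1.
  replace (Xs / (ell / INR N)) with (Xs * INR N / ell) in H1 by (field; lra).
  assert (ell * (INR N + 1) <= Xs * INR N + ell * W).
  { apply Rmult_le_compat_l with (r := ell) in H1; [|lra].
    replace (ell * (Xs * INR N / ell + W)) with (Xs * INR N + ell * W) in H1 by (field; lra).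
    lra. }
  nra.
Qed.

Definition tri_set (a : vec) (g : nat -> R) (G : nat -> nat -> R) (s : R) (t : nat) (x : vec) : Prop :=
  exists y : nat -> R, forall i, (i < t)%nat ->
    - s <= y i <= s /\ x i = a i + g i * y i + sumR i (fun k => G i k * y k).

Lemma box_vol_nonneg t b : box_ok t b -> 0 <= box_vol t b.
Proof. intros H. unfold box_vol. apply prodR_nonneg. intros k Hk. pose proof (H k Hk). lra. Qed.

Lemma vol_tri (a : vec) (g : nat -> R) (G : nat -> nat -> R) (s : R) :
  0 <= s -> (forall i, 0 <= g i) ->
  forall t {X} (l : list X) (w : X -> R) (bx : X -> box),
  (forall e, In e l -> 0 <= w e /\ box_ok t (bx e)) ->
  (forall x, tri_set a g G s t x -> 1 <= lsum l (fun e => w e * indic (in_box t (bx e) x))) ->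
  prodR t (fun i => 2 * s * g i) <= lsum l (fun e => w e * box_vol t (bx e)).
Proof.
  intros Hs Hg t. induction t; intros X l w bx Hl Hcov.
  - simpl prodR. unfold box_vol; simpl prodR.
    rewrite (lsum_ext l _ (fun e => w e * indic (in_box 0 (bx e) (fun _ => 0)))).
    + apply Hcov. exists (fun _ => 0). intros i Hi; lia.
    + intros e _. rewrite indic_T; auto. intros i Hi; lia.
  - cbn [prodR]. set (ell := 2 * s * g t).
    assert (Hl' : forall e, In e l -> 0 <= w e /\ box_ok t (bx e)).
    { intros e He. destruct (Hl e He) as [H1 H2]. split; auto. intros i Hi. apply H2; lia. }
    assert (Hlen : forall e, In e l -> 0 <= snd (bx e) t - fst (bx e) t).
    { intros e He. destruct (Hl e He) as [_ H2]. pose proof (H2 t ltac:(lia)). lra. }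
    assert (Hvol : lsum l (fun e => w e * box_vol (S t) (bx e)) =
                   lsum l (fun e => w e * (snd (bx e) t - fst (bx e) t) * box_vol t (bx e))).
    { apply lsum_ext. intros e _. unfold box_vol. cbn [prodR]. ring. }
    rewrite Hvol.
    destruct (Req_dec ell 0) as [He0|He0].
    + rewrite He0, Rmult_0_r. apply lsum_nonneg. intros e He.
      destruct (Hl' e He) as [H1 H2]. pose proof (Hlen e He).
      pose proof (box_vol_nonneg t (bx e) H2).
      apply Rmult_le_pos; auto. apply Rmult_le_pos; auto.
    + assert (Hgt : 0 < g t).
      { destruct (Hg t) as [|Hg0]; auto. exfalso. apply He0. unfold ell. rewrite <- Hg0. ring. }
      assert (Hs' : 0 < s).
      { destruct Hs as [|Hs0]; auto. exfalso. apply He0. unfold ell. rewrite <- Hs0. ring. }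
      assert (Hell : 0 < ell) by (unfold ell; nra).
      set (w' := fun e => w e * (snd (bx e) t - fst (bx e) t) / ell).
      assert (IH := IHt X l w' bx).
      assert (Hprod : prodR t (fun i => 2 * s * g i) <= lsum l (fun e => w' e * box_vol t (bx e))).
      { apply IH.
        - intros e He. destruct (Hl' e He). split; auto. unfold w'.
          apply Rmult_le_pos; [apply Rmult_le_pos; auto; apply Hlen; auto|].
          left; apply Rinv_0_lt_compat; auto.
        - intros x [y Hy].
          set (Hs0 := sumR t (fun k => G t k * y k)).
          assert (H1D : ell <= lsum l (fun e => (w e * indic (in_box t (bx e) x)) * (snd (bx e) t - fst (bx e) t))).
          { apply oneD with (al := a t + Hs0 - s * g t).
            - intros e He. destruct (Hl' e He) as [H1 _]. pose proof (indic_01 (in_box t (bx e) x)).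
              pose proof (Hlen e He). split; [nra|lra].
            - lra.
            - intros tau Htau.
              set (x' := fun j => if Nat.eqb j t then tau else x j).
              set (y' := fun j => if Nat.eqb j t then (tau - a t - Hs0) / g t else y j).
              assert (Hx' : tri_set a g G s (S t) x').
              { exists y'. intros i Hi.
                assert (Hsum : sumR i (fun k => G i k * y' k) = sumR i (fun k => G i k * y k)).
                { apply sumR_ext. intros k Hk. unfold y'. destruct (Nat.eqb_spec k t); [lia|auto]. }
                rewrite Hsum. unfold x', y'.
                destruct (Nat.eqb_spec i t).
                - subst i. fold Hs0. split.
                  + split; apply Rmult_le_reg_l with (g t); auto;
                    (replace (g t * ((tau - a t - Hs0) / g t)) with (tau - a t - Hs0) by (field; lra)); unfold ell in Htau; nra.
                  + field. lra.
                - apply Hy. lia. }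
              pose proof (Hcov x' Hx').
              eapply Rle_trans; [apply H|]. right. apply lsum_ext. intros e _.
              rewrite Rmult_assoc. f_equal.
              rewrite <- indic_and. apply indic_iff. unfold in_box, x'. split.
              + intros Hb. split.
                * intros i Hi. pose proof (Hb i ltac:(lia)). destruct (Nat.eqb_spec i t); [lia|auto].
                * pose proof (Hb t ltac:(lia)). rewrite Nat.eqb_refl in H0. auto.
              + intros [Hb1 Hb2] i Hi. destruct (Nat.eqb_spec i t).
                * subst; auto.
                * apply Hb1; lia. }
          apply Rmult_le_reg_l with ell; auto. rewrite Rmult_1_r.
          eapply Rle_trans; [apply H1D|]. right.
          rewrite <- lsum_scal. apply lsum_ext. intros e _. unfold w'. field. lra. }
      apply Rmult_le_compat_r with (r := ell) in Hprod; [|lra].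
      eapply Rle_trans; [apply Hprod|]. right.
      rewrite Rmult_comm, <- lsum_scal. apply lsum_ext. intros e _. unfold w'. field. lra.
Qed.

Lemma sumR_trunc n t f : (t <= n)%nat ->
  sumR n (fun i => if Nat.ltb i t then f i else 0) = sumR t f.
Proof.
  induction n; intros H.
  - assert (t = 0%nat) by lia. subst. reflexivity.
  - destruct (Nat.eq_dec t (S n)).
    + subst. apply sumR_ext. intros k Hk. destruct (Nat.ltb_spec k (S n)); [auto|lia].
    + cbn [sumR]. rewrite IHn by lia. destruct (Nat.ltb_spec n t); [lia|]. ring.
Qed.

Lemma dot_comm n u v : dot n u v = dot n v u.
Proof. unfold dot. apply sumR_ext. intros; ring. Qed.

Lemma GS n (A : mat) : forall t, (t <= n)%nat ->
  exists (b : nat -> vec) (L T : nat -> nat -> R),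
  (forall k, (k < t)%nat ->
     (forall j, (j < n)%nat -> b k j = sumR n (fun i => T k i * A i j)) /\
     T k k = 1 /\ (forall i, (k < i)%nat -> T k i = 0) /\
     (forall j, (j < n)%nat -> A k j = sumR n (fun i => L k i * b i j)) /\
     L k k = 1 /\ (forall i, (k < i)%nat -> L k i = 0)) /\
  (forall k i, (k < t)%nat -> (i < t)%nat -> k <> i -> dot n (b k) (b i) = 0).
Proof.
  induction t; intros Ht.
  - exists (fun _ _ => 0), (fun _ _ => 0), (fun _ _ => 0). split; intros; lia.
  - destruct (IHt ltac:(lia)) as [b [L [T [Hk Horth]]]].
    set (mu := fun i => dot n (fun j => A t j) (b i) / dot n (b i) (b i)).
    set (nb := fun j => A t j - sumR t (fun i => mu i * b i j)).
    set (b' := fun k => if Nat.eqb k t then nb else b k).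
    set (T' := fun k i => if Nat.eqb k t then ((if Nat.eqb i t then 1 else 0) - sumR t (fun l => mu l * T l i)) else T k i).
    set (L' := fun k i => if Nat.eqb k t then (if Nat.eqb i t then 1 else if Nat.ltb i t then mu i else 0) else L k i).
    assert (Eb : forall k, (k < t)%nat -> b' k = b k).
    { intros k Hk'. unfold b'. destruct (Nat.eqb_spec k t); [lia|auto]. }
    assert (Ebt : b' t = nb) by (unfold b'; rewrite Nat.eqb_refl; auto).
    assert (Hnew : forall i, (i < t)%nat -> dot n nb (b i) = 0).
    { intros i Hi. unfold dot, nb.
      rewrite (sumR_ext n _ (fun j => A t j * b i j - sumR t (fun l => mu l * (b l j * b i j))))
        by (intros j _; rewrite Rmult_minus_distr_r, <- sumR_scalr; f_equal; apply sumR_ext; intros; ring).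
      rewrite sumR_minus, sumR_swap.
      rewrite (sumR_ext t _ (fun l => if Nat.eqb l i then mu l * dot n (b l) (b l) else 0)).
      2:{ intros l Hl. rewrite sumR_scal.
          change (sumR n (fun j => b l j * b i j)) with (dot n (b l) (b i)). destruct (Nat.eqb_spec l i).
          - subst. reflexivity.
          - rewrite (Horth l i) by lia. ring. }
      rewrite sumR_kron by lia. unfold mu.
      destruct (Req_dec (dot n (b i) (b i)) 0) as [HD|HD].
      + rewrite HD. unfold dot in HD. pose proof (sumR_sq_zero n (b i) HD) as Hz.
        rewrite sumR_zero; [ring|]. intros j Hj. rewrite Hz by auto. ring.
      + unfold dot in *. cbv beta. field. auto. }
    exists b', L', T'. split.
    + intros k Hkt. destruct (Nat.eq_dec k t).
      * subst k. unfold T', L'. rewrite !Nat.eqb_refl. rewrite Ebt.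
        split; [|split; [|split; [|split; [|split]]]].
        -- intros j Hj. unfold nb.
           rewrite (sumR_ext n _ (fun i => (if Nat.eqb i t then A i j else 0) - sumR t (fun l => mu l * (T l i * A i j))))
             by (intros i _; rewrite Rmult_minus_distr_r, <- sumR_scalr; f_equal;
                 [destruct (Nat.eqb_spec i t); ring | apply sumR_ext; intros; ring]).
           rewrite sumR_minus, sumR_kron by lia. f_equal.
           rewrite sumR_swap. apply sumR_ext. intros l Hl. rewrite sumR_scal. f_equal. symmetry.
           symmetry. apply (proj1 (Hk l Hl)). lia.
        -- rewrite sumR_zero; [ring|]. intros l Hl. destruct (Hk l Hl) as [_ [_ [H0 _]]].
           rewrite H0 by lia. ring.
        -- intros i Hi. destruct (Nat.eqb_spec i t); [lia|].
           rewrite sumR_zero; [ring|]. intros l Hl. destruct (Hk l Hl) as [_ [_ [H0 _]]].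
           rewrite H0 by lia. ring.
        -- intros j Hj.
           rewrite (sumR_ext n _ (fun i => (if Nat.ltb i t then mu i * b i j else 0) + (if Nat.eqb i t then nb j else 0))).
           2:{ intros i Hi. unfold b'. destruct (Nat.eqb_spec i t); destruct (Nat.ltb_spec i t); try lia; ring. }
           rewrite sumR_plus, sumR_trunc, sumR_kron by lia. unfold nb. ring.
        -- auto.
        -- intros i Hi. destruct (Nat.eqb_spec i t); [lia|]. destruct (Nat.ltb_spec i t); [lia|auto].
      * assert (Hk' : (k < t)%nat) by lia.
        destruct (Hk k Hk') as [H1 [H2 [H3 [H4 [H5 H6]]]]].
        unfold T', L'. destruct (Nat.eqb_spec k t); [lia|]. rewrite Eb by auto.
        split; [auto|split; [auto|split; [auto|split; [|split; auto]]]].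
        intros j Hj. rewrite H4 by auto. apply sumR_ext. intros i Hi.
        destruct (Nat.lt_ge_cases i t).
        -- rewrite Eb; auto.
        -- destruct (Nat.eq_dec i t).
           ++ subst. rewrite H6 by lia. ring.
           ++ rewrite H6 by lia. ring.
    + intros k i Hkt Hit Hki.
      destruct (Nat.eq_dec k t); destruct (Nat.eq_dec i t); try lia.
      * subst k. rewrite Ebt, Eb by lia. apply Hnew. lia.
      * subst i. rewrite Ebt, Eb by lia. rewrite dot_comm. apply Hnew. lia.
      * rewrite !Eb by lia. apply Horth; lia.
Qed.

Lemma sumR_mul_sums n m f g :
  sumR n f * sumR m g = sumR n (fun i => sumR m (fun l => f i * g l)).
Proof.
  rewrite <- sumR_scalr. apply sumR_ext. intros i _. rewrite <- sumR_scal. reflexivity.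
Qed.

Lemma bilin n (A : mat) p r :
  sumR n (fun i => p i * mvmul n (mmul n A (mtr A)) r i) =
  sumR n (fun j => sumR n (fun i => p i * A i j) * sumR n (fun l => r l * A l j)).
Proof.
  unfold mvmul, mmul, mtr.
  transitivity (sumR n (fun i => sumR n (fun l => sumR n (fun j => p i * A i j * (r l * A l j))))).
  { apply sumR_ext; intros i _. rewrite <- sumR_scal. apply sumR_ext; intros l _.
    rewrite <- sumR_scalr, <- sumR_scal. apply sumR_ext; intros; ring. }
  transitivity (sumR n (fun i => sumR n (fun j => sumR n (fun l => p i * A i j * (r l * A l j))))).
  { apply sumR_ext; intros i _. apply sumR_swap. }
  rewrite (sumR_swap n n (fun i j => sumR n (fun l => p i * A i j * (r l * A l j)))).
  apply sumR_ext; intros j _. symmetry. apply sumR_mul_sums.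
Qed.

Lemma orth_expand n (b : nat -> vec) g h :
  (forall k i, (k < n)%nat -> (i < n)%nat -> k <> i -> dot n (b k) (b i) = 0) ->
  sumR n (fun j => sumR n (fun k => g k * b k j) * sumR n (fun k => h k * b k j)) =
  sumR n (fun k => g k * h k * dot n (b k) (b k)).
Proof.
  intros Ho.
  rewrite (sumR_ext n (fun j => _ * _) (fun j => sumR n (fun k => sumR n (fun k' => g k * h k' * (b k j * b k' j)))))
    by (intros; rewrite sumR_mul_sums; apply sumR_ext; intros; apply sumR_ext; intros; ring).
  rewrite sumR_swap. apply sumR_ext. intros k Hk.
  rewrite sumR_swap.
  rewrite (sumR_ext n _ (fun k' => if Nat.eqb k' k then g k * h k * dot n (b k) (b k) else 0)).
  - apply sumR_kron; auto.
  - intros k' Hk'. rewrite sumR_scal. change (sumR n (fun j => b k j * b k' j)) with (dot n (b k) (b k')).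
    destruct (Nat.eqb_spec k' k).
    + subst. reflexivity.
    + rewrite Ho by auto. ring.
Qed.

Lemma inv_sym n (A Minv : mat) : is_inverse n Minv (mmul n A (mtr A)) ->
  forall i j, (i < n)%nat -> (j < n)%nat -> Minv i j = Minv j i.
Proof.
  intros H i j Hi Hj. set (M := mmul n A (mtr A)).
  assert (Msym : forall k l, M k l = M l k).
  { intros. unfold M, mmul, mtr. apply sumR_ext. intros; ring. }
  transitivity (sumR n (fun l => Minv i l * mmul n Minv M j l)).
  { rewrite <- (sumR_kron' n j (fun l => Minv i l)) by auto.
    apply sumR_ext. intros l Hl. rewrite H by auto. destruct (Nat.eqb j l); ring. }
  unfold mmul. rewrite (sumR_ext n _ (fun l => sumR n (fun k => Minv j k * (Minv i l * M l k)))).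
  2:{ intros l _. rewrite <- sumR_scal. apply sumR_ext. intros k _. rewrite (Msym k l). ring. }
  rewrite sumR_swap.
  rewrite (sumR_ext n _ (fun k => Minv j k * (if Nat.eqb i k then 1 else 0))).
  2:{ intros k Hk. rewrite sumR_scal. f_equal. apply H; auto. }
  rewrite <- (sumR_kron' n i (fun k => Minv j k)) by auto.
  apply sumR_ext. intros k _. destruct (Nat.eqb i k); ring.
Qed.

Lemma inv_right n (A Minv : mat) : is_inverse n Minv (mmul n A (mtr A)) ->
  forall d i, (i < n)%nat -> mvmul n (mmul n A (mtr A)) (mvmul n Minv d) i = d i.
Proof.
  intros H d i Hi. set (M := mmul n A (mtr A)).
  assert (Msym : forall k l, M k l = M l k).
  { intros. unfold M, mmul, mtr. apply sumR_ext. intros; ring. }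
  unfold mvmul.
  rewrite (sumR_ext n _ (fun k => sumR n (fun l => M i k * Minv k l * d l)))
    by (intros; rewrite <- sumR_scal; apply sumR_ext; intros; ring).
  rewrite sumR_swap.
  rewrite <- (sumR_kron' n i d) by auto.
  apply sumR_ext. intros l Hl. rewrite sumR_scalr.
  assert (sumR n (fun k => M i k * Minv k l) = if Nat.eqb i l then 1 else 0).
  { rewrite Nat.eqb_sym, <- (H l i) by auto. change (mmul n Minv M l i) with (sumR n (fun k => Minv l k * M k i)).
    apply sumR_ext. intros k Hk. rewrite (Msym i k), (inv_sym n A Minv H k l) by auto. unfold M. ring. }
  rewrite H0. destruct (Nat.eqb i l); ring.
Qed.

Lemma inv_left n (A Minv : mat) : is_inverse n Minv (mmul n A (mtr A)) ->
  forall w i, (i < n)%nat -> mvmul n Minv (mvmul n (mmul n A (mtr A)) w) i = w i.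
Proof.
  intros H w i Hi. set (M := mmul n A (mtr A)).
  unfold mvmul.
  rewrite (sumR_ext n _ (fun k => sumR n (fun l => Minv i k * M k l * w l)))
    by (intros; rewrite <- sumR_scal; apply sumR_ext; intros; ring).
  rewrite sumR_swap.
  rewrite <- (sumR_kron' n i w) by auto.
  apply sumR_ext. intros l Hl. rewrite sumR_scalr.
  change (sumR n (fun k => Minv i k * M k l)) with (mmul n Minv M i l).
  rewrite H by auto. destruct (Nat.eqb i l); ring.
Qed.

Fixpoint prod_nat (n : nat) (K : nat -> nat) : nat :=
  match n with O => 1 | S k => prod_nat k K * K k end.

Module Pig.
From mathcomp Require Import all_boot.
Local Close Scope R_scope.
Local Open Scope nat_scope.

Lemma prod_nat_big n K : prod_nat n K = \prod_(i < n) K i.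
Proof.
  elim: n => [|n IH]; first by rewrite big_ord0.
  by rewrite big_ord_recr /= IH.
Qed.

Lemma pigeon n m (K : nat -> nat) (F : (nat -> nat) -> nat -> nat) :
  (prod_nat n K < Nat.pow m n)%coq_nat ->
  (forall p i, (i < n)%coq_nat -> (F p i < K i)%coq_nat) ->
  exists p q, (forall i, (i < n)%coq_nat -> (p i < m)%coq_nat) /\
              (forall i, (i < n)%coq_nat -> (q i < m)%coq_nat) /\
              (exists i, (i < n)%coq_nat /\ p i <> q i) /\
              (forall i, (i < n)%coq_nat -> F p i = F q i).
Proof.
  have -> : Nat.pow m n = m ^ n by elim: n {K F} => //= n IH; rewrite expnS IH.
  move=> /ltP Hlt HF.
  pose pt (g : {ffun 'I_n -> 'I_m}) : nat -> nat :=
    fun i => if insub i is Some j then val (g j) else 0.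
  have ptE g (j : 'I_n) : pt g (val j) = val (g j).
    by rewrite /pt valK.
  have HFb : forall p (i : 'I_n), F p i < K i.
    by move=> p i; apply/ltP; apply: HF; apply/ltP.
  pose f (g : {ffun 'I_n -> 'I_m}) : {dffun forall i : 'I_n, 'I_(K i)} :=
    [ffun i => Ordinal (HFb (pt g) i)].
  have Hninj : ~ injective f.
    move=> Hinj. have := leq_card f Hinj.
    rewrite card_ffun !card_ord card_dep_ffun.
    have -> : foldr muln 1 [seq #|'I_(K x)| | x : 'I_n] = \prod_(i < n) K i.
      rewrite foldrE big_map big_enum /=. by apply: eq_bigr => i _; rewrite card_ord.
    by rewrite -prod_nat_big leqNgt Hlt.
  have [g [h [Hfgh Hgh]]] : exists g h, f g = f h /\ g <> h.
    apply: NNPP => Hno; apply: Hninj => g h Hfe.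
    apply: NNPP => Hne; apply: Hno; by exists g, h.
  exists (pt g), (pt h); split; [|split; [|split]].
  - move=> i Hi. have Hi' : i < n by apply/ltP.
    have := ptE g (Ordinal Hi'); rewrite /= => ->; apply/ltP; exact: ltn_ord.
  - move=> i Hi. have Hi' : i < n by apply/ltP.
    have := ptE h (Ordinal Hi'); rewrite /= => ->; apply/ltP; exact: ltn_ord.
  - apply: NNPP => Hall; apply: Hgh; apply/ffunP => j; apply: val_inj.
    rewrite -(ptE g j) -(ptE h j).
    case: (classic (pt g (val j) = pt h (val j))) => // Hne.
    exfalso; apply: Hall; exists (val j); split => //.
    apply/ltP; exact: ltn_ord.
  - move=> i Hi. have Hi' : i < n by apply/ltP.
    have := congr1 (fun u : {dffun forall i : 'I_n, 'I_(K i)} => nat_of_ord (u (Ordinal Hi'))) Hfgh.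
    by rewrite /f !ffunE.
Qed.
End Pig.

Definition lat (n : nat) (U : nat -> nat -> R) (c : nat -> Z) (k : nat) : R :=
  sumR n (fun i => U k i * IZR (c i)).

Lemma reduce n U (x : vec) :
  (forall k, (k < n)%nat -> 0 < U k k) -> (forall k i, (i < k)%nat -> U k i = 0) ->
  exists c : nat -> Z, forall k, (k < n)%nat -> 0 <= x k - lat n U c k < U k k.
Proof.
  intros Hd Hu.
  assert (H : forall t, (t <= n)%nat -> exists c : nat -> Z,
    (forall i, (i < n - t)%nat -> c i = 0%Z) /\
    (forall k, (n - t <= k < n)%nat -> 0 <= x k - lat n U c k < U k k)).
  { induction t; intros Ht.
    - exists (fun _ => 0%Z). split; [auto|]. intros k Hk; lia.
    - destruct (IHt ltac:(lia)) as [c [Hc0 Hc]].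
      set (k0 := (n - S t)%nat).
      set (v := Int_part ((x k0 - lat n U c k0) / U k0 k0)).
      set (c' := fun i => if Nat.eqb i k0 then v else c i).
      assert (Hlat : forall k, lat n U c' k = lat n U c k + U k k0 * IZR v).
      { intros k. unfold lat.
        rewrite <- (sumR_kron n k0 (fun i => U k i * IZR v)) by lia.
        rewrite <- sumR_plus. apply sumR_ext. intros i Hi. unfold c'.
        destruct (Nat.eqb_spec i k0).
        - subst i. rewrite (Hc0 k0) by lia. simpl. ring.
        - ring. }
      exists c'. split.
      + intros i Hi. unfold c'. destruct (Nat.eqb_spec i k0); [lia|]. apply Hc0; lia.
      + intros k Hk. rewrite Hlat.
        destruct (Nat.eq_dec k k0).
        * subst k. pose proof (Hd k0 ltac:(lia)).
          pose proof (base_Int_part ((x k0 - lat n U c k0) / U k0 k0)) as [B1 B2].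
          fold v in B1, B2.
          set (z := x k0 - lat n U c k0) in *.
          assert (IZR v * U k0 k0 <= z).
          { apply Rmult_le_compat_r with (r := U k0 k0) in B1; [|lra].
            replace (z / U k0 k0 * U k0 k0) with z in B1 by (field; lra). lra. }
          assert (z < (IZR v + 1) * U k0 k0).
          { assert (z / U k0 k0 < IZR v + 1) by lra.
            apply Rmult_lt_compat_r with (r := U k0 k0) in H1; [|lra].
            replace (z / U k0 k0 * U k0 k0) with z in H1 by (field; lra). lra. }
          unfold z in *; split; lra.
        * rewrite (Hu k k0) by lia. rewrite Rmult_0_l, Rplus_0_r. apply Hc. lia. }
  destruct (H n ltac:(lia)) as [c [_ Hc]]. exists c. intros k Hk. apply Hc. lia.
Qed.

Lemma INR_prod_nat n K : INR (prod_nat n K) = prodR n (fun i => INR (K i)).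
Proof. induction n; simpl prod_nat; cbn [prodR]; [reflexivity|]. rewrite mult_INR, IHn. auto. Qed.

Lemma INR_pow m n : INR (Nat.pow m n) = INR m ^ n.
Proof. induction n; simpl; [reflexivity|]. rewrite mult_INR, IHn. ring. Qed.

Lemma INR_IZR_to_nat z : (0 <= z)%Z -> INR (Z.to_nat z) = IZR z.
Proof. intros H. rewrite INR_IZR_INZ. f_equal. lia. Qed.

Lemma Int_part_nonneg r : 0 <= r -> (0 <= Int_part r)%Z.
Proof.
  intros H. destruct (base_Int_part r) as [_ B].
  assert (-1 < IZR (Int_part r)) by lra.
  apply lt_IZR in H0. lia.
Qed.

Lemma minkowski n (U : nat -> nat -> R) (d : R) :
  0 < d -> (forall k, (k < n)%nat -> 0 < U k k) -> (forall k i, (i < k)%nat -> U k i = 0) ->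
  prodR n (fun k => U k k) < d ^ n ->
  exists c : nat -> Z, (exists k, (k < n)%nat /\ c k <> 0%Z) /\
    forall k, (k < n)%nat -> Rabs (lat n U c k) < d.
Proof.
  intros Hd Hdiag Hup Hprod.
  set (rho := fun k => U k k / d).
  assert (Hrho : forall k, (k < n)%nat -> 0 <= rho k).
  { intros k Hk. unfold rho. pose proof (Hdiag k Hk). apply Rlt_le, Rdiv_lt_0_compat; lra. }
  set (P0 := prodR n rho). set (P1 := prodR n (fun k => rho k + 1)).
  assert (HP0 : P0 < 1).
  { unfold P0, rho. rewrite (prodR_ext n _ (fun k => / d * U k k)) by (intros; unfold Rdiv; ring).
    rewrite prodR_scal. rewrite <- Rinv_pow by lra.
    apply Rmult_lt_reg_l with (d ^ n); [apply pow_lt; lra|].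
    rewrite <- Rmult_assoc, Rinv_r by (apply pow_nonzero; lra). lra. }
  assert (HP1 : 0 <= P1) by (apply prodR_nonneg; intros k Hk; pose proof (Hrho k Hk); lra).
  destruct (INR_archimed (1 - P0) (INR n * P1)) as [m Hm]; [lra|].
  assert (Hn0 : 0 <= INR n) by apply pos_INR.
  assert (Hm0 : 0 < INR m).
  { destruct m; [simpl in Hm; nra|apply lt_0_INR; lia]. }
  assert (Hm1 : 1 <= INR m).
  { destruct m; [simpl in Hm0; lra|]. rewrite S_INR. pose proof (pos_INR m). lra. }
  set (eps := / INR m).
  assert (Heps : 0 <= eps <= 1).
  { unfold eps. split; [left; apply Rinv_0_lt_compat; lra|].
    rewrite <- Rinv_1. apply Rinv_le_contravar; lra. }
  assert (Hsmall : prodR n (fun k => rho k + eps) < 1).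
  { eapply Rle_lt_trans; [apply prodR_eps; auto|]. fold P0 P1.
    assert (eps * INR n * P1 < 1 - P0); [|lra].
    apply Rmult_lt_reg_l with (INR m); [lra|].
    replace (INR m * (eps * INR n * P1)) with (INR n * P1) by (unfold eps; field; lra). lra. }
  set (z := fun i => INR m * U i i / d).
  set (K := fun i => S (Z.to_nat (Int_part (z i)))).
  assert (Hz : forall i, (i < n)%nat -> 0 <= z i).
  { intros i Hi. unfold z. pose proof (Hdiag i Hi). apply Rlt_le, Rdiv_lt_0_compat; nra. }
  assert (HK : forall i, (i < n)%nat -> z i < INR (K i) <= z i + 1).
  { intros i Hi. unfold K. rewrite S_INR, INR_IZR_to_nat by (apply Int_part_nonneg; auto).
    destruct (base_Int_part (z i)). lra. }
  assert (HKpos : forall i, 0 < INR (K i)).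
  { intros i. unfold K. apply lt_0_INR. lia. }
  assert (Hcard : (prod_nat n K < Nat.pow m n)%nat).
  { apply INR_lt. rewrite INR_prod_nat, INR_pow.
    eapply Rle_lt_trans.
    { apply prodR_le with (g := fun i => INR m * (rho i + eps)). intros k Hk.
      split; [apply pos_INR|]. destruct (HK k Hk) as [_ H2]. eapply Rle_trans; [apply H2|].
      right. unfold z, rho, eps. field. lra. }
    rewrite prodR_scal. rewrite <- (Rmult_1_r (INR m ^ n)) at 2.
    apply Rmult_lt_compat_l; auto. apply pow_lt. lra. }
  assert (Hred : forall x : vec, { c : nat -> Z | forall k, (k < n)%nat -> 0 <= x k - lat n U c k < U k k }).
  { intros x. apply constructive_indefinite_description. apply reduce; auto. }
  set (xp := fun (p : nat -> nat) (i : nat) => d * INR (p i) / INR m).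
  set (cp := fun p => proj1_sig (Hred (xp p))).
  set (yp := fun p k => xp p k - lat n U (cp p) k).
  assert (Hyp : forall p k, (k < n)%nat -> 0 <= yp p k < U k k).
  { intros p k Hk. unfold yp, cp. destruct (Hred (xp p)) as [c Hc]. simpl. apply Hc; auto. }
  set (w := fun p i => yp p i * INR (K i) / U i i).
  assert (Hw : forall p i, (i < n)%nat -> 0 <= w p i < INR (K i)).
  { intros p i Hi. unfold w. pose proof (Hyp p i Hi). pose proof (HKpos i). pose proof (Hdiag i Hi).
    split.
    - apply Rmult_le_pos; [nra|]. left; apply Rinv_0_lt_compat; lra.
    - apply Rmult_lt_reg_r with (U i i); [lra|].
      replace (yp p i * INR (K i) / U i i * U i i) with (yp p i * INR (K i)) by (field; lra). nra. }
  set (F := fun p i => Z.to_nat (Int_part (w p i))).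
  assert (HF : forall p i, (i < n)%nat -> (F p i < K i)%nat).
  { intros p i Hi. unfold F. destruct (Hw p i Hi) as [H1 H2].
    pose proof (Int_part_nonneg _ H1). destruct (base_Int_part (w p i)) as [B1 _].
    assert (IZR (Int_part (w p i)) < IZR (Z.of_nat (K i))) by (rewrite <- INR_IZR_INZ; lra).
    apply lt_IZR in H0. lia. }
  destruct (Pig.pigeon n m K F Hcard HF) as [p [q [Hp [Hq [[i0 [Hi0 Hpq]] HFpq]]]]].
  set (c := fun i => (cp p i - cp q i)%Z).
  assert (Hlatc : forall k, lat n U c k = (xp p k - yp p k) - (xp q k - yp q k)).
  { intros k. unfold yp.
    replace (xp p k - (xp p k - lat n U (cp p) k) - (xp q k - (xp q k - lat n U (cp q) k)))
      with (lat n U (cp p) k - lat n U (cp q) k) by ring.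
    unfold lat. rewrite <- sumR_minus.
    apply sumR_ext. intros i _. unfold c. rewrite minus_IZR. ring. }
  assert (Hdy : forall k, (k < n)%nat -> Rabs (yp p k - yp q k) < d / INR m).
  { intros k Hk. pose proof (HFpq k Hk) as E. unfold F in E.
    destruct (Hw p k Hk) as [Hw1 _]. destruct (Hw q k Hk) as [Hw2 _].
    pose proof (Int_part_nonneg _ Hw1). pose proof (Int_part_nonneg _ Hw2).
    assert (E' : Int_part (w p k) = Int_part (w q k)) by lia.
    destruct (base_Int_part (w p k)). destruct (base_Int_part (w q k)).
    rewrite E' in *.
    assert (Habs : Rabs (w p k - w q k) < 1) by (apply Rabs_def1; lra).
    pose proof (HKpos k). pose proof (Hdiag k Hk). destruct (HK k Hk) as [HK1 _].
    assert (Ew : w p k - w q k = (yp p k - yp q k) * (INR (K k) / U k k)) by (unfold w; field; lra).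
    rewrite Ew, Rabs_mult, (Rabs_right (INR (K k) / U k k)) in Habs
      by (left; apply Rdiv_lt_0_compat; lra).
    assert (Rabs (yp p k - yp q k) * INR (K k) < U k k).
    { apply Rmult_lt_compat_r with (r := U k k) in Habs; [|lra].
      replace (Rabs (yp p k - yp q k) * (INR (K k) / U k k) * U k k) with
        (Rabs (yp p k - yp q k) * INR (K k)) in Habs by (field; lra). lra. }
    unfold z in HK1.
    assert (INR m * U k k < d * INR (K k)).
    { apply Rmult_lt_compat_l with (r := d) in HK1; [|lra].
      replace (d * (INR m * U k k / d)) with (INR m * U k k) in HK1 by (field; lra). lra. }
    apply Rmult_lt_reg_r with (INR m * INR (K k)); [nra|].
    replace (d / INR m * (INR m * INR (K k))) with (d * INR (K k)) by (field; lra).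
    pose proof (Rabs_pos (yp p k - yp q k)). nra. }
  assert (Hdx : forall k, (k < n)%nat -> xp p k - xp q k = d / INR m * (INR (p k) - INR (q k))).
  { intros k Hk. unfold xp. field. lra. }
  exists c. split.
  - apply NNPP. intros Hno.
    assert (Hc0 : forall i, (i < n)%nat -> c i = 0%Z).
    { intros i Hi. apply NNPP. intros Hne. apply Hno. exists i. auto. }
    assert (lat n U c i0 = 0).
    { unfold lat. apply sumR_zero. intros i Hi. rewrite Hc0 by auto. simpl. ring. }
    rewrite Hlatc in H.
    assert (Hxy : xp p i0 - xp q i0 = yp p i0 - yp q i0) by lra.
    pose proof (Hdy i0 Hi0). rewrite <- Hxy, Hdx in H0 by auto.
    assert (1 <= Rabs (INR (p i0) - INR (q i0))).
    { destruct (Nat.lt_total (p i0) (q i0)) as [Hl|[Hl|Hl]]; [|contradiction|].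
      - apply lt_INR in Hl. rewrite Rabs_left1 by lra.
        assert (INR (S (p i0)) <= INR (q i0)) by (apply le_INR; apply INR_lt; auto; lia).
        rewrite S_INR in H1. lra.
      - assert (INR (S (q i0)) <= INR (p i0)) by (apply le_INR; lia).
        rewrite S_INR in H1. apply lt_INR in Hl. rewrite Rabs_right by lra. lra. }
    rewrite Rabs_mult, Rabs_right in H0 by (left; apply Rdiv_lt_0_compat; lra).
    assert (d / INR m * 1 <= d / INR m * Rabs (INR (p i0) - INR (q i0))).
    { apply Rmult_le_compat_l; auto. left; apply Rdiv_lt_0_compat; lra. }
    lra.
  - intros k Hk. rewrite Hlatc.
    replace (xp p k - yp p k - (xp q k - yp q k)) with ((xp p k - xp q k) - (yp p k - yp q k)) by ring.
    eapply Rle_lt_trans; [apply Rabs_triang|]. rewrite Rabs_Ropp.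
    pose proof (Hdy k Hk). rewrite Hdx by auto.
    assert (Rabs (INR (p k) - INR (q k)) <= INR m - 1).
    { pose proof (Hp k Hk). pose proof (Hq k Hk).
      assert (INR (S (p k)) <= INR m) by (apply le_INR; lia).
      assert (INR (S (q k)) <= INR m) by (apply le_INR; lia).
      rewrite S_INR in *. pose proof (pos_INR (p k)). pose proof (pos_INR (q k)).
      apply Rabs_le; lra. }
    rewrite Rabs_mult, Rabs_right by (left; apply Rdiv_lt_0_compat; lra).
    assert (d / INR m * Rabs (INR (p k) - INR (q k)) <= d / INR m * (INR m - 1)).
    { apply Rmult_le_compat_l; auto. left; apply Rdiv_lt_0_compat; lra. }
    replace (d / INR m * (INR m - 1)) with (d - d / INR m) in H1 by (field; lra).
    lra.
Qed.

Lemma sumR_split_at n i f : (i < n)%nat -> (forall k, (i < k)%nat -> f k = 0) ->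
  sumR n f = sumR i f + f i.
Proof.
  intros Hi Hz.
  rewrite (sumR_ext n f (fun k => (if Nat.ltb k i then f k else 0) + (if Nat.eqb k i then f k else 0))).
  - rewrite sumR_plus, sumR_trunc, sumR_kron by lia. auto.
  - intros k Hk. destruct (Nat.ltb_spec k i); destruct (Nat.eqb_spec k i); try lia; subst; try ring.
    rewrite Hz by lia. ring.
Qed.

Lemma Mvec n (A : mat) r i :
  mvmul n (mmul n A (mtr A)) r i = sumR n (fun j => A i j * sumR n (fun l => r l * A l j)).
Proof.
  unfold mvmul, mmul, mtr.
  rewrite (sumR_ext n _ (fun l => sumR n (fun j => A i j * (r l * A l j))))
    by (intros; rewrite <- sumR_scalr; apply sumR_ext; intros; ring).
  rewrite sumR_swap. apply sumR_ext. intros; rewrite sumR_scal. auto.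
Qed.

Theorem mainTheorem11 (n : nat) (A Minv : mat) (a : vec) :
  is_inverse n Minv (mmul n A (mtr A)) ->
  vol_lt n (ellipsoid n A Minv a) 1 ->
  lattice_width_le n (ellipsoid n A Minv a) (INR n).
Proof.
  intros Hinv [bs [Hok [Hcov Hsum]]].
  assert (Hcov' : forall x, ellipsoid n A Minv a x -> 1 <= lsum bs (fun b => 1 * indic (in_box n b x))).
  { intros x Hx. destruct (Hcov x Hx) as [b [Hb Hin]]. apply lsum_ge_one with b; auto.
    - intros b' _; pose proof (indic_01 (in_box n b' x)); lra.
    - rewrite indic_T; auto; lra. }
  assert (HV : lsum bs (fun b => 1 * box_vol n b) < 1).
  { rewrite (lsum_ext bs _ (box_vol n)) by (intros; ring). exact Hsum. }
  destruct (Nat.eq_dec n 0) as [Hn0|Hn0].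
  { exfalso. subst n.
    assert (prodR 0 (fun i => 2 * 0 * 0) <= lsum bs (fun b => 1 * box_vol 0 b)).
    { apply (vol_tri a (fun _ => 0) (fun _ _ => 0) 0); [lra|intros; lra| |].
      - intros e He. split; [lra| apply Hok; auto].
      - intros x _. apply Hcov'. unfold ellipsoid, dot. simpl. lra. }
    simpl in H. lra. }
  destruct (GS n A n (le_n n)) as [b [L [T [Hk Horth]]]].
  set (D := fun k => dot n (b k) (b k)).
  assert (HD : forall k, (k < n)%nat -> 0 < D k).
  { intros k Hkn.
    assert (0 <= D k) by (unfold D, dot; apply sumR_nonneg; intros; nra).
    destruct H as [|H]; auto. exfalso.
    pose proof (sumR_sq_zero n (b k) (eq_sym H)) as Hb0.
    destruct (Hk k Hkn) as [HbT [HT1 [HT0 _]]].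
    assert (HMt : forall l, (l < n)%nat -> mvmul n (mmul n A (mtr A)) (T k) l = 0).
    { intros l Hl. rewrite Mvec. apply sumR_zero. intros j Hj.
      rewrite <- HbT, Hb0 by auto. ring. }
    pose proof (inv_left n A Minv Hinv (T k) k Hkn) as E1.
    rewrite HT1 in E1. unfold mvmul at 1 in E1.
    rewrite sumR_zero in E1; [lra|]. intros l Hl. rewrite HMt by auto. ring. }
  assert (Hab : forall i k, (i < n)%nat -> (k < n)%nat ->
            sumR n (fun j => A i j * b k j) = L i k * D k).
  { intros i k Hi Hkn. destruct (Hk i Hi) as [_ [_ [_ [HA _]]]].
    rewrite (sumR_ext n _ (fun j => sumR n (fun l => L i l * (b l j * b k j))))
      by (intros j Hj; rewrite HA by auto; rewrite <- sumR_scalr; apply sumR_ext; intros; ring).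
    rewrite sumR_swap.
    rewrite (sumR_ext n _ (fun l => if Nat.eqb l k then L i l * D l else 0)).
    - apply sumR_kron; auto.
    - intros l Hl. rewrite sumR_scal. change (sumR n (fun j => b l j * b k j)) with (dot n (b l) (b k)).
      destruct (Nat.eqb_spec l k); [subst; reflexivity|]. rewrite Horth by auto. ring. }
  set (gv := fun (p : nat -> R) k => sumR n (fun i => p i * L i k)).
  assert (HAb : forall p j, (j < n)%nat ->
            sumR n (fun i => p i * A i j) = sumR n (fun k => gv p k * b k j)).
  { intros p j Hj. unfold gv.
    rewrite (sumR_ext n (fun i => p i * A i j) (fun i => sumR n (fun k => p i * L i k * b k j))).
    - rewrite sumR_swap. apply sumR_ext. intros; rewrite sumR_scalr. auto.
    - intros i Hi. destruct (Hk i Hi) as [_ [_ [_ [HA _]]]]. rewrite HA by auto.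
      rewrite <- sumR_scal. apply sumR_ext; intros; ring. }
  assert (Hq : forall p, sumR n (fun j => sumR n (fun i => p i * A i j) * sumR n (fun i => p i * A i j))
                        = sumR n (fun k => gv p k * gv p k * D k)).
  { intros p. rewrite (sumR_ext n _ (fun j => sumR n (fun k => gv p k * b k j) * sumR n (fun k => gv p k * b k j)))
      by (intros j Hj; rewrite HAb by auto; auto).
    apply orth_expand. auto. }
  assert (Hwidth : forall (c : nat -> Z) x, ellipsoid n A Minv a x ->
            (zdot n c (fun i => x i - a i)) ^ 2 <= sumR n (fun k => gv (fun i => IZR (c i)) k * gv (fun i => IZR (c i)) k * D k)).
  { intros c x Hx. unfold ellipsoid in Hx.
    set (d := fun i => x i - a i) in *.
    set (w := mvmul n Minv d) in *.
    assert (E1 : zdot n c d = sumR n (fun j => sumR n (fun i => IZR (c i) * A i j) * sumR n (fun l => w l * A l j))).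
    { rewrite <- bilin. unfold zdot. apply sumR_ext. intros i Hi. unfold w. rewrite inv_right; auto. }
    assert (E2 : dot n d w = sumR n (fun j => sumR n (fun l => w l * A l j) * sumR n (fun l => w l * A l j))).
    { rewrite <- bilin. unfold dot. apply sumR_ext. intros i Hi. unfold w. rewrite inv_right; auto. ring. }
    rewrite E1. rewrite <- Hq.
    eapply Rle_trans; [apply cauchy_schwarz|]. cbv beta.
    rewrite <- E2.
    assert (0 <= sumR n (fun k => sumR n (fun i => IZR (c i) * A i k) * sumR n (fun i => IZR (c i) * A i k)))
      by (apply sumR_nonneg; intros; nra).
    assert (0 <= dot n d w) by (rewrite E2; apply sumR_nonneg; intros; nra).
    nra. }
  assert (Hn : 0 < INR n) by (apply lt_0_INR; lia).
  set (sn := sqrt (INR n)).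
  assert (Hsn : 0 < sn) by (apply sqrt_lt_R0; auto).
  assert (Hsn2 : sn * sn = INR n) by (apply sqrt_sqrt; lra).
  set (s := / sn).
  assert (Hs : 0 < s) by (apply Rinv_0_lt_compat; auto).
  set (g := fun k => sqrt (D k)).
  assert (Hg : forall k, (k < n)%nat -> 0 < g k) by (intros; apply sqrt_lt_R0; auto).
  assert (Hgg : forall k, (k < n)%nat -> g k * g k = D k) by (intros; apply sqrt_sqrt; pose proof (HD k H); lra).
  assert (Hvol : prodR n (fun i => 2 * s * g i) <= lsum bs (fun b => 1 * box_vol n b)).
  { apply (vol_tri a g (fun i k => L i k * g k) s); [lra| intros; apply sqrt_pos | |].
    - intros e He. split; [lra| apply Hok; auto].
    - intros x [y Hy]. apply Hcov'. unfold ellipsoid.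
      set (d := fun i => x i - a i).
      assert (Hd : forall i, (i < n)%nat -> d i = sumR n (fun k => L i k * g k * y k)).
      { intros i Hi. unfold d. destruct (Hy i Hi) as [_ ->].
        destruct (Hk i Hi) as [_ [_ [_ [_ [HL1 HL0]]]]].
        rewrite (sumR_split_at n i) by (auto; intros; rewrite HL0 by auto; ring).
        rewrite HL1. ring. }
      set (w' := fun l => sumR n (fun k => (y k / g k) * T k l)).
      assert (Hwb : forall j, (j < n)%nat -> sumR n (fun l => w' l * A l j) = sumR n (fun k => (y k / g k) * b k j)).
      { intros j Hj. unfold w'.
        rewrite (sumR_ext n _ (fun l => sumR n (fun k => (y k / g k) * (T k l * A l j))))
          by (intros; rewrite <- sumR_scalr; apply sumR_ext; intros; ring).
        rewrite sumR_swap. apply sumR_ext. intros k Hkn. rewrite sumR_scal. f_equal.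
        destruct (Hk k Hkn) as [HbT _]. rewrite HbT by auto. auto. }
      assert (HMw : forall i, (i < n)%nat -> mvmul n (mmul n A (mtr A)) w' i = d i).
      { intros i Hi. rewrite Mvec, Hd by auto.
        rewrite (sumR_ext n _ (fun j => sumR n (fun k => (y k / g k) * (A i j * b k j))))
          by (intros j Hj; rewrite Hwb by auto; rewrite <- sumR_scal; apply sumR_ext; intros; ring).
        rewrite sumR_swap. apply sumR_ext. intros k Hkn. rewrite sumR_scal, Hab by auto.
        rewrite <- (Hgg k Hkn). pose proof (Hg k Hkn). field. lra. }
      assert (Hw' : forall l, (l < n)%nat -> mvmul n Minv d l = w' l).
      { intros l Hl. rewrite <- (inv_left n A Minv Hinv w' l Hl). unfold mvmul at 1 2.
        apply sumR_ext. intros m Hm. rewrite HMw by auto. auto. }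
      unfold dot. rewrite (sumR_ext n _ (fun i => w' i * mvmul n (mmul n A (mtr A)) w' i)).
      2:{ intros i Hi. rewrite Hw', HMw by auto. fold d. ring. }
      rewrite bilin.
      rewrite (sumR_ext n _ (fun j => sumR n (fun k => (y k / g k) * b k j) * sumR n (fun k => (y k / g k) * b k j)))
        by (intros j Hj; rewrite Hwb by auto; auto).
      rewrite orth_expand by auto.
      rewrite (sumR_ext n _ (fun k => y k * y k)).
      2:{ intros k Hkn. fold (D k). rewrite <- (Hgg k Hkn). pose proof (Hg k Hkn). field. lra. }
      apply Rle_trans with (sumR n (fun _ => s * s)).
      + apply sumR_le. intros k Hkn. destruct (Hy k Hkn) as [[Hy1 Hy2] _]. nra.
      + rewrite sumR_const. unfold s. rewrite <- Hsn2. right. field. lra. }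
  assert (Hprod : prodR n g < (sn / 2) ^ n).
  { rewrite prodR_scal in Hvol.
    assert (Hmul : (2 * s * (sn / 2)) ^ n = 1).
    { replace (2 * s * (sn / 2)) with 1 by (unfold s; field; lra). apply pow1. }
    rewrite Rpow_mult_distr in Hmul.
    assert (0 < (sn / 2) ^ n) by (apply pow_lt; lra).
    assert ((2 * s) ^ n * prodR n g < 1) by lra.
    apply Rmult_lt_compat_l with (r := (sn/2)^n) in H0; auto.
    rewrite <- Rmult_assoc, (Rmult_comm ((sn/2)^n)), Hmul in H0. lra. }
  set (U := fun k i => if Nat.ltb i n then g k * L i k else 0).
  destruct (minkowski n U (sn / 2)) as [c [Hc0 Hc]].
  - lra.
  - intros k Hkn. unfold U. destruct (Hk k Hkn) as [_ [_ [_ [_ [HL1 _]]]]]. rewrite HL1.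
    destruct (Nat.ltb_spec k n); [|lia]. rewrite Rmult_1_r. auto.
  - intros k i Hik. unfold U.
    destruct (Nat.ltb_spec i n); [|auto].
    destruct (Hk i H) as [_ [_ [_ [_ [_ HL0]]]]]. rewrite HL0 by auto. ring.
  - rewrite (prodR_ext n _ g); auto. intros k Hkn. unfold U.
    destruct (Hk k Hkn) as [_ [_ [_ [_ [HL1 _]]]]]. rewrite HL1.
    destruct (Nat.ltb_spec k n); [|lia]. ring.
  - exists c. split; auto.
    set (cr := fun i => IZR (c i)).
    assert (Hqc : sumR n (fun k => gv cr k * gv cr k * D k) <= INR n * INR n / 4).
    { apply Rle_trans with (sumR n (fun _ => sn / 2 * (sn / 2))).
      - apply sumR_le. intros k Hkn. pose proof (Hc k Hkn) as Hck.
        assert (lat n U c k = g k * gv cr k).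
        { unfold lat, U, gv, cr. rewrite <- sumR_scal. apply sumR_ext. intros i Hi.
          destruct (Nat.ltb_spec i n); [ring|lia]. }
        rewrite H in Hck. rewrite <- (Hgg k Hkn).
        apply Rabs_def2 in Hck. nra.
      - rewrite sumR_const. right. rewrite <- Hsn2. field. }
    intros x y Hx Hy.
    pose proof (Hwidth c x Hx). pose proof (Hwidth c y Hy).
    fold cr in H, H0.
    set (zx := zdot n c (fun i => x i - a i)) in *.
    set (zy := zdot n c (fun i => y i - a i)) in *.
    assert (Hzx2 : zx * zx <= INR n * INR n / 4) by (simpl in H; lra).
    assert (Hzy2 : zy * zy <= INR n * INR n / 4) by (simpl in H0; lra).
    assert (Hzx : - (INR n / 2) <= zx <= INR n / 2) by (split; nra).
    assert (Hzy : - (INR n / 2) <= zy <= INR n / 2) by (split; nra).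
    assert (zdot n c x - zdot n c y = zx - zy).
    { unfold zx, zy, zdot. rewrite <- !sumR_minus. apply sumR_ext. intros; ring. }
    lra.
Qed.
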